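(* Let $S_j$ be local potentials satisfying (A)–(E), and let $(p_1,q_1),\dots,(p_d,q_d)\in\mathbb{Z}^d\times\mathbb{Z}$ with $p_1,\dots,p_d$ linearly independent. Then every minimizer $x$ of $W_{p,q}$ on $\mathbb{X}_{p,q}$ is a global minimizer.
   Context: Notation: $\|i\|=\sum_{k=1}^d|i_k|$, $B_j^r=\{k:\|k-j\|\le r\}$, $(\tau_{k,l}x)_i=x_{i+k}+l$. Local potentials $S_j:\mathbb{R}^{\mathbb{Z}^d}\to\mathbb{R}$, $j\in\mathbb{Z}^d$, satisfy: (A) there is $r\in(0,\infty)$ and $C^2$ functions $s_j:\mathbb{R}^{B_j^r}\to\mathbb{R}$ with $S_j(x)=s_j(x|_{B_j^r})$; (B) $S_j(\tau_{k,l}x)=S_{j+k}(x)$; (C) each $S_j$ is bounded below and $S_j(x)\to\infty$ as $|x_k-x_j|\to\infty$ whenever $\|k-j\|=1$; (D) $\partial_{i,k}S_j\le0$ for $i\ne k$, and $\partial_{i,k}S_i<0$ when $\|i-k\|=1$; (E) $|\partial_{i,k}S_j|\le C$ uniformly. With $p$ the matrix with columns $p_j$: $B_p=p([0,1)^d)\cap\mathbb{Z}^d$, $\mathbb{X}_{p,q}=\{x:\tau_{p_j,q_j}x=x\ \forall j\}$, $W_{p,q}(x)=\sum_{j\in B_p}S_j(x)$. For finite $B\subset\mathbb{Z}^d$: $W_B(x)=\sum_{j\in B}S_j(x)$ and $\mathring{B}^{(r)}=\{i\in B:B_i^r\subset B\}$. A configuration $x$ is a global minimizer if $W_B(x+y)\ge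 W_B(x)$ for every finite $B\subset\mathbb{Z}^d$ and every $y\in\mathbb{R}^{\mathbb{Z}^d}$ with support in $\mathring{B}^{(r)}$. *)

(* Defs.v *)
From Stdlib Require Import Reals Lra Lia ZArith List Eqdep_dec.
Import ListNotations.
Open Scope R_scope.

Definition Zd (d : nat) := { v : list Z | length v = d }.

Definition comp {d} (v : Zd d) (m : nat) : Z := nth m (proj1_sig v) 0%Z.

Fixpoint lzip (f : Z -> Z -> Z) (a b : list Z) : list Z :=
  match a, b with
  | x :: a', y :: b' => f x y :: lzip f a' b'
  | _, _ => nil
  end.

Lemma lzip_length f a b : length a = length b -> length (lzip f a b) = length a.
Proof.
  revert b; induction a as [|x a IH]; intros [|y b] H; simpl in *; try easy.
  f_equal; apply IH; lia.
Qed.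

Definition vadd {d} (v w : Zd d) : Zd d :=
  exist _ (lzip Z.add (proj1_sig v) (proj1_sig w))
    (eq_trans (lzip_length _ _ _ (eq_trans (proj2_sig v) (eq_sym (proj2_sig w))))
              (proj2_sig v)).

Definition vsub {d} (v w : Zd d) : Zd d :=
  exist _ (lzip Z.sub (proj1_sig v) (proj1_sig w))
    (eq_trans (lzip_length _ _ _ (eq_trans (proj2_sig v) (eq_sym (proj2_sig w))))
              (proj2_sig v)).

Definition norm1 {d} (v : Zd d) : Z :=
  fold_right (fun z acc => (Z.abs z + acc)%Z) 0%Z (proj1_sig v).

Lemma Zd_eq_dec {d} (v w : Zd d) : {v = w} + {v <> w}.
Proof.
  destruct v as [v Hv], w as [w Hw].
  destruct (list_eq_dec Z.eq_dec v w) as [E|E].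
  - left. subst w. f_equal. apply UIP_dec, Nat.eq_dec.
  - right. intros H. inversion H. contradiction.
Defined.

Definition in_ball {d} (j : Zd d) (r : R) (k : Zd d) : Prop :=
  IZR (norm1 (vsub k j)) <= r.

Definition Conf (d : nat) := Zd d -> R.

Definition tau {d} (k : Zd d) (l : Z) (x : Conf d) : Conf d :=
  fun i => x (vadd i k) + IZR l.

Definition bump {d} (x : Conf d) (i : Zd d) (t : R) : Conf d :=
  fun k => if Zd_eq_dec k i then x k + t else x k.

Definition conf_add {d} (x y : Conf d) : Conf d := fun i => x i + y i.

Definition is_partial {d} (f : Conf d -> R) (i : Zd d) (g : Conf d -> R) : Prop :=
  forall x, derivable_pt_lim (fun t => f (bump x i t)) 0 (g x).

Definition cont_on_ball {d} (j : Zd d) (r : R) (f : Conf d -> R) : Prop :=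
  forall x eps, 0 < eps -> exists delta, 0 < delta /\
    forall y, (forall k, in_ball j r k -> Rabs (y k - x k) < delta) ->
      Rabs (f y - f x) < eps.

(* (A): S_j(x) = s_j(x|_{B_j^r}) *)
Definition local_pot {d} (S : Zd d -> Conf d -> R) (r : R) : Prop :=
  forall j x y, (forall k, in_ball j r k -> x k = y k) -> S j x = S j y.

(* (A), C^2 part: s_j is C^2, expressed as: all first and second partial
   derivatives exist and are continuous in the variables x|_{B_j^r}.
   D2 j i k = \partial_{i,k} S_j = \partial_k \partial_i S_j. *)
Definition C2_pot {d} (S : Zd d -> Conf d -> R) (r : R)
  (D2 : Zd d -> Zd d -> Zd d -> Conf d -> R) : Prop :=
  exists D1 : Zd d -> Zd d -> Conf d -> R,
    (forall j i, is_partial (S j) i (D1 j i)) /\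
    (forall j i k, is_partial (D1 j i) k (D2 j i k)) /\
    (forall j i, cont_on_ball j r (D1 j i)) /\
    (forall j i k, cont_on_ball j r (D2 j i k)).

(* W_B(x) = sum_{j in B} S_j(x), B a finite set given as a duplicate-free list *)
Definition W_B {d} (S : Zd d -> Conf d -> R) (B : list (Zd d)) (x : Conf d) : R :=
  fold_right (fun j acc => S j x + acc) 0 B.

Definition in_interior {d} (r : R) (B : list (Zd d)) (i : Zd d) : Prop :=
  In i B /\ forall k, in_ball i r k -> In k B.

Definition global_minimizer {d} (S : Zd d -> Conf d -> R) (r : R) (x : Conf d) : Prop :=
  forall (B : list (Zd d)) (y : Conf d), NoDup B ->
    (forall i, y i <> 0 -> in_interior r B i) ->
    W_B S B x <= W_B S B (conf_add x y).

Definition sumR (n : nat) (f : nat -> R) : R :=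
  fold_right Rplus 0 (map f (seq 0 n)).

Definition lin_indep {d} (p : nat -> Zd d) : Prop :=
  forall c : nat -> R,
    (forall m, (m < d)%nat -> sumR d (fun j => c j * IZR (comp (p j) m)) = 0) ->
    forall j, (j < d)%nat -> c j = 0.

Definition in_Bp {d} (p : nat -> Zd d) (z : Zd d) : Prop :=
  exists t : nat -> R, (forall j, (j < d)%nat -> 0 <= t j < 1) /\
    forall m, (m < d)%nat -> IZR (comp z m) = sumR d (fun j => t j * IZR (comp (p j) m)).

Definition in_Xpq {d} (p : nat -> Zd d) (q : nat -> Z) (x : Conf d) : Prop :=
  forall j, (j < d)%nat -> forall i, tau (p j) (q j) x i = x i.

(* Main.v *)
Require Import Defs.
From Stdlib Require Import Reals ZArith List.
Open Scope R_scope.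
From Stdlib Require Import Lra Lia Eqdep_dec FunctionalExtensionality Permutation Sorting ClassicalEpsilon.
From HB Require Import structures.
From mathcomp Require all_boot all_algebra Rstruct.
Require Import Defs.
Import ListNotations.

Module LinAlg.
Import all_boot all_algebra Rstruct.
Import GRing.Theory.
Local Open Scope ring_scope.

Lemma sumR_big n (f : nat -> R) : sumR n f = \sum_(j < n) f j.
Proof.
rewrite /sumR -(big_mkord xpredT f) /index_iota subn0.
elim: n 0%nat => [|n IH] k; first by rewrite big_nil.
by rewrite /= big_cons IH.
Qed.

Lemma span_of_indep d (a : nat -> nat -> R) :
  (forall c : nat -> R, (forall m, lt m d -> sumR d (fun j => Rmult (c j) (a j m)) = R0) ->
     forall j, lt j d -> c j = R0) ->
  forall v : nat -> R, exists s : nat -> R,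
    forall m, lt m d -> sumR d (fun j => Rmult (s j) (a j m)) = v m.
Proof.
move=> H0 v.
have H : forall c : nat -> R, (forall m, (m < d)%N -> sumR d (fun j => Rmult (c j) (a j m)) = 0) ->
     forall j, (j < d)%N -> c j = 0.
  move=> c Hc j /ltP Hj; apply: (H0 c) => // m /ltP; exact: Hc.
pose A := (\matrix_(j < d, m < d) a j m : 'M[R]_d).
have detA : (\det A != 0)%R.
  apply/negP => /det0P [w nw0 wA].
  case/negP: nw0; apply/eqP/rowP => j.
  pose c := fun j : nat => match (insub j : option 'I_d) with Some k => w ord0 k | None => 0 end.
  have cE : forall k : 'I_d, c k = w ord0 k by move=> k; rewrite /c valK.
  rewrite mxE -cE; apply: (H c) => //; move=> m ltm.
  have := congr1 (fun M : 'rV[R]_d => M ord0 (Ordinal ltm)) wA.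
  rewrite !mxE sumR_big => E; rewrite -[RHS]E; apply: eq_bigr => k _; by rewrite cE mxE.
have uA : A \in unitmx by rewrite unitmxE unitfE.
pose vr := (\row_(m < d) v m : 'rV[R]_d).
pose sr := vr *m invmx A.
exists (fun j => match (insub j : option 'I_d) with Some k => sr ord0 k | None => 0 end).
move=> m /ltP ltm.
have := congr1 (fun M : 'rV[R]_d => M ord0 (Ordinal ltm)) (mulmxKV uA vr).
rewrite !mxE sumR_big => <-; apply: eq_bigr => k _; by rewrite valK !mxE.
Qed.
End LinAlg.


Set Bullet Behavior "Strict Subproofs".

Definition sumZ (n : nat) (f : nat -> Z) : Z := fold_right Z.add 0%Z (map f (seq 0 n)).

Lemma sumZ_S n f : sumZ (S n) f = (f 0%nat + sumZ n (fun m => f (S m)))%Z.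
Proof. unfold sumZ. simpl. rewrite <- seq_shift, map_map. reflexivity. Qed.
Lemma sumR_S n f : sumR (S n) f = f 0%nat + sumR n (fun m => f (S m)).
Proof. unfold sumR. simpl. rewrite <- seq_shift, map_map. reflexivity. Qed.
Lemma sumZ_0 f : sumZ 0 f = 0%Z. Proof. reflexivity. Qed.
Lemma sumR_0 f : sumR 0 f = 0. Proof. reflexivity. Qed.

Lemma sumZ_ext n f g : (forall m, (m < n)%nat -> f m = g m) -> sumZ n f = sumZ n g.
Proof.
  revert f g; induction n; intros f g H. reflexivity.
  rewrite !sumZ_S. rewrite H by lia. f_equal. apply IHn. intros; apply H; lia.
Qed.
Lemma sumR_ext n f g : (forall m, (m < n)%nat -> f m = g m) -> sumR n f = sumR n g.
Proof.
  revert f g; induction n; intros f g H. reflexivity.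
  rewrite !sumR_S. rewrite H by lia. f_equal. apply IHn. intros; apply H; lia.
Qed.
Lemma sumZ_add n f g : sumZ n (fun m => f m + g m)%Z = (sumZ n f + sumZ n g)%Z.
Proof. revert f g; induction n; intros. reflexivity. rewrite !sumZ_S, IHn. lia. Qed.
Lemma sumR_add n f g : sumR n (fun m => f m + g m) = sumR n f + sumR n g.
Proof. revert f g; induction n; intros. simpl; unfold sumR; simpl; lra. rewrite !sumR_S, IHn. lra. Qed.
Lemma sumZ_opp n f : sumZ n (fun m => - f m)%Z = (- sumZ n f)%Z.
Proof. revert f; induction n; intros. reflexivity. rewrite !sumZ_S, IHn. lia. Qed.
Lemma sumZ_mul n c f : sumZ n (fun m => c * f m)%Z = (c * sumZ n f)%Z.
Proof. revert f; induction n; intros. simpl. unfold sumZ; simpl; lia. rewrite !sumZ_S, IHn. lia. Qed.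
Lemma sumR_mul n c f : sumR n (fun m => c * f m) = c * sumR n f.
Proof. revert f; induction n; intros. unfold sumR; simpl; lra. rewrite !sumR_S, IHn. lra. Qed.
Lemma sumR_IZR n f : IZR (sumZ n f) = sumR n (fun m => IZR (f m)).
Proof. revert f; induction n; intros. reflexivity. rewrite sumZ_S, sumR_S, plus_IZR, IHn. reflexivity. Qed.
Lemma sumZ_delta n k a : (k < n)%nat -> sumZ n (fun j => if Nat.eq_dec j k then a else 0%Z) = a.
Proof.
  revert k; induction n; intros k Hk. lia.
  rewrite sumZ_S. destruct k.
  - destruct (Nat.eq_dec 0 0); [|lia]. rewrite (sumZ_ext _ _ (fun _ => 0%Z)).
    + clear. induction n. rewrite sumZ_0. lia. rewrite sumZ_S. lia.
    + intros. destruct Nat.eq_dec; lia.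
  - destruct (Nat.eq_dec 0 (S k)); [lia|].
    rewrite (sumZ_ext _ _ (fun j => if Nat.eq_dec j k then a else 0%Z)).
    + rewrite IHn; lia.
    + intros. destruct (Nat.eq_dec (S m) (S k)), (Nat.eq_dec m k); lia.
Qed.

Section Vec.
Variable d : nat.

Lemma nth_lzip f a b m : length a = length b -> f 0%Z 0%Z = 0%Z ->
  nth m (lzip f a b) 0%Z = f (nth m a 0%Z) (nth m b 0%Z).
Proof.
  revert b m; induction a as [|x a IH]; intros [|y b] m H H0; simpl in *; try lia.
  - destruct m; auto.
  - destruct m; auto.
Qed.

Lemma comp_vadd (v w : Zd d) m : comp (vadd v w) m = (comp v m + comp w m)%Z.
Proof.
  unfold comp, vadd; simpl. apply nth_lzip. rewrite (proj2_sig v), (proj2_sig w). reflexivity. reflexivity.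
Qed.
Lemma comp_vsub (v w : Zd d) m : comp (vsub v w) m = (comp v m - comp w m)%Z.
Proof.
  unfold comp, vsub; simpl. apply nth_lzip. rewrite (proj2_sig v), (proj2_sig w). reflexivity. reflexivity.
Qed.

Lemma Zd_ext (v w : Zd d) : (forall m, (m < d)%nat -> comp v m = comp w m) -> v = w.
Proof.
  destruct v as [v Hv], w as [w Hw]. unfold comp; simpl. intros H.
  assert (v = w). { apply nth_ext with 0%Z 0%Z. lia. intros n Hn. apply H. lia. }
  subst w. f_equal. apply UIP_dec, Nat.eq_dec.
Qed.

Definition mkZd (f : nat -> Z) : Zd d :=
  exist _ (map f (seq 0 d)) (eq_trans (length_map _ _) (length_seq _ _)).

Lemma comp_mkZd f m : (m < d)%nat -> comp (mkZd f) m = f m.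
Proof.
  intros H. unfold comp, mkZd; simpl.
  rewrite nth_indep with (d' := f 0%nat) by (rewrite length_map, length_seq; lia).
  rewrite map_nth, seq_nth by lia. reflexivity.
Qed.

Lemma norm1_sum (v : Zd d) : norm1 v = sumZ d (fun m => Z.abs (comp v m)).
Proof.
  destruct v as [l Hl]. unfold norm1, comp; simpl. subst d.
  induction l as [|z l IH]. reflexivity.
  simpl length. rewrite sumZ_S. simpl. rewrite IH. reflexivity.
Qed.

Definition vzero : Zd d := mkZd (fun _ => 0%Z).

Lemma vadd_assoc (a b c : Zd d) : vadd (vadd a b) c = vadd a (vadd b c).
Proof. apply Zd_ext; intros. rewrite !comp_vadd. lia. Qed.
Lemma vadd_comm (a b : Zd d) : vadd a b = vadd b a.
Proof. apply Zd_ext; intros. rewrite !comp_vadd. lia. Qed.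
Lemma vadd_zero (a : Zd d) : vadd a vzero = a.
Proof. apply Zd_ext; intros. rewrite !comp_vadd. unfold vzero. rewrite comp_mkZd by auto. lia. Qed.

Lemma norm1_vsub_sym (a b : Zd d) : norm1 (vsub a b) = norm1 (vsub b a).
Proof. rewrite !norm1_sum. apply sumZ_ext. intros. rewrite !comp_vsub. lia. Qed.

Lemma norm1_vsub_shift (a b c : Zd d) : norm1 (vsub (vadd a c) (vadd b c)) = norm1 (vsub a b).
Proof. rewrite !norm1_sum. apply sumZ_ext. intros. rewrite !comp_vsub, !comp_vadd. f_equal. lia. Qed.

Lemma in_ball_sym (j k : Zd d) r : in_ball j r k -> in_ball k r j.
Proof. unfold in_ball. rewrite norm1_vsub_sym. auto. Qed.

End Vec.
Section Lattice.
Variable d : nat.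
Variable p : nat -> Zd d.

Definition Pv (n : nat -> Z) : Zd d :=
  mkZd d (fun m => sumZ d (fun j => n j * comp (p j) m)%Z).

Lemma comp_Pv n m : (m < d)%nat -> comp (Pv n) m = sumZ d (fun j => n j * comp (p j) m)%Z.
Proof. intros. unfold Pv. rewrite comp_mkZd; auto. Qed.

Lemma Pv_add n1 n2 : Pv (fun j => n1 j + n2 j)%Z = vadd (Pv n1) (Pv n2).
Proof.
  apply Zd_ext; intros m Hm. rewrite comp_vadd, !comp_Pv by auto.
  rewrite <- sumZ_add. apply sumZ_ext; intros; lia.
Qed.
Lemma Pv_sub n1 n2 : Pv (fun j => n1 j - n2 j)%Z = vsub (Pv n1) (Pv n2).
Proof.
  apply Zd_ext; intros m Hm. rewrite comp_vsub, !comp_Pv by auto.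
  rewrite (sumZ_ext _ _ (fun j => n1 j * comp (p j) m + - (n2 j * comp (p j) m))%Z) by (intros; lia).
  rewrite sumZ_add, sumZ_opp. lia.
Qed.
Lemma Pv_ext n1 n2 : (forall j, (j < d)%nat -> n1 j = n2 j) -> Pv n1 = Pv n2.
Proof.
  intros H; apply Zd_ext; intros m Hm. rewrite !comp_Pv by auto.
  apply sumZ_ext; intros. rewrite H; auto.
Qed.
Definition unitv (k : nat) : nat -> Z := fun j => if Nat.eq_dec j k then 1%Z else 0%Z.
Lemma Pv_unit k : (k < d)%nat -> Pv (unitv k) = p k.
Proof.
  intros Hk; apply Zd_ext; intros m Hm. rewrite comp_Pv by auto.
  rewrite (sumZ_ext _ _ (fun j => if Nat.eq_dec j k then comp (p k) m else 0%Z)).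
  - apply sumZ_delta; auto.
  - intros j _. unfold unitv. destruct Nat.eq_dec; subst; lia.
Qed.
Lemma Pv_zero : Pv (fun _ => 0%Z) = vzero d.
Proof.
  apply Zd_ext; intros m Hm. rewrite comp_Pv by auto. unfold vzero. rewrite comp_mkZd by auto.
  rewrite (sumZ_ext _ _ (fun _ => 0%Z)). clear. induction d. reflexivity. rewrite sumZ_S. lia.
  intros; lia.
Qed.

Hypothesis indep : lin_indep p.
Hypothesis span : forall v : nat -> R, exists s : nat -> R,
    forall m, (m < d)%nat -> sumR d (fun j => s j * IZR (comp (p j) m)) = v m.
Variable Lp : list (Zd d).
Hypothesis HLp : forall z, In z Lp <-> in_Bp p z.

Definition fl (s : R) : Z := (up s - 1)%Z.
Lemma fl_spec s : IZR (fl s) <= s < IZR (fl s) + 1.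
Proof. unfold fl. destruct (archimed s). rewrite minus_IZR. simpl. lra. Qed.

Lemma dec_exists v : exists u n, In u Lp /\ v = vadd u (Pv n).
Proof.
  destruct (span (fun m => IZR (comp v m))) as [s Hs].
  exists (vsub v (Pv (fun j => fl (s j)))), (fun j => fl (s j)). split.
  - apply HLp. exists (fun j => s j - IZR (fl (s j))). split.
    + intros j _. pose proof (fl_spec (s j)). lra.
    + intros m Hm. rewrite comp_vsub, comp_Pv by auto. rewrite minus_IZR, sumR_IZR, <- Hs by auto.
      rewrite (sumR_ext d (fun j => (s j - IZR (fl (s j))) * IZR (comp (p j) m))
        (fun j => s j * IZR (comp (p j) m) + (-1) * IZR (fl (s j) * comp (p j) m)%Z))
        by (intros; rewrite mult_IZR; ring).
      rewrite sumR_add, sumR_mul. ring.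
  - apply Zd_ext. intros m Hm. rewrite comp_vadd, comp_vsub. lia.
Qed.

Lemma Z_small (z : Z) : -1 < IZR z < 1 -> z = 0%Z.
Proof. intros [H1 H2]. apply lt_IZR in H1. apply lt_IZR in H2. lia. Qed.

Lemma dec_unique u u' n n' : In u Lp -> In u' Lp -> vadd u (Pv n) = vadd u' (Pv n') ->
  u = u' /\ forall j, (j < d)%nat -> n j = n' j.
Proof.
  intros Hu Hu' E. apply HLp in Hu as [t [Ht1 Ht2]]. apply HLp in Hu' as [t' [Ht1' Ht2']].
  assert (Hc : forall m, (m < d)%nat -> (comp u m + sumZ d (fun j => n j * comp (p j) m) =
      comp u' m + sumZ d (fun j => n' j * comp (p j) m))%Z).
  { intros m Hm. rewrite <- !comp_Pv, <- !comp_vadd by auto. rewrite E. reflexivity. }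
  assert (Hn : forall j, (j < d)%nat -> n j = n' j).
  { intros j Hj.
    assert (H0 := indep (fun j => t j + IZR (n j) - t' j - IZR (n' j))).
    assert (Hz : t j + IZR (n j) - t' j - IZR (n' j) = 0).
    { apply H0; auto. intros m Hm. pose proof (Hc m Hm) as Hcm.
      apply (f_equal IZR) in Hcm. rewrite !plus_IZR, !sumR_IZR, Ht2, Ht2' in Hcm by auto.
      rewrite (sumR_ext d _ (fun j => t j * IZR (comp (p j) m) + IZR (n j) * IZR (comp (p j) m)
        + (-1) * (t' j * IZR (comp (p j) m) + IZR (n' j) * IZR (comp (p j) m)))).
      - rewrite !sumR_add, !sumR_mul, !sumR_add.
        rewrite (sumR_ext d (fun j => IZR (n j * comp (p j) m)) (fun j => IZR (n j) * IZR (comp (p j) m))) in Hcm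
          by (intros; apply mult_IZR).
        rewrite (sumR_ext d (fun j => IZR (n' j * comp (p j) m)) (fun j => IZR (n' j) * IZR (comp (p j) m))) in Hcm
          by (intros; apply mult_IZR).
        lra.
      - intros. ring. }
    specialize (Ht1 j Hj); specialize (Ht1' j Hj).
    assert (IZR (n j - n' j) = t' j - t j) by (rewrite minus_IZR; lra).
    assert (n j - n' j = 0)%Z by (apply Z_small; lra). lia. }
  split; auto.
  apply Zd_ext. intros m Hm. pose proof (Hc m Hm).
  rewrite (sumZ_ext d _ (fun j => n' j * comp (p j) m)%Z) in H by (intros; rewrite Hn; auto). lia.
Qed.

End Lattice.
Section Calc.
Variable d : nat.

Definition cmax (a b : Conf d) : Conf d := fun i => Rmax (a i) (b i).
Definition cmin (a b : Conf d) : Conf d := fun i => Rmin (a i) (b i).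

Lemma bump_0 (x : Conf d) i : bump x i 0 = x.
Proof. apply functional_extensionality; intro k; unfold bump; destruct Zd_eq_dec; lra. Qed.
Lemma bump_bump (x : Conf d) i a b : bump (bump x i a) i b = bump x i (a + b).
Proof. apply functional_extensionality; intro k; unfold bump; destruct Zd_eq_dec; lra. Qed.
Lemma bump_comm (x : Conf d) i k a b : bump (bump x i a) k b = bump (bump x k b) i a.
Proof. apply functional_extensionality; intro j; unfold bump; destruct Zd_eq_dec, Zd_eq_dec; lra. Qed.

Lemma deriv_shift (G : R -> R) tau l :
  derivable_pt_lim (fun t => G (tau + t)) 0 l -> derivable_pt_lim G tau l.
Proof.
  intros H eps Heps. destruct (H eps Heps) as [delta Hd]. exists delta. intros h Hh Hhd.
  specialize (Hd h Hh Hhd). rewrite Rplus_0_l, Rplus_0_r in Hd. exact Hd.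
Qed.

Lemma partial_along (f g : Conf d -> R) i (x : Conf d) :
  is_partial f i g -> forall tau, derivable_pt_lim (fun t => f (bump x i t)) tau (g (bump x i tau)).
Proof.
  intros H tau. apply deriv_shift. specialize (H (bump x i tau)).
  apply (derivable_pt_lim_ext (fun t => f (bump (bump x i tau) i t))); [|exact H].
  intros z. rewrite bump_bump. reflexivity.
Qed.

Lemma mono_dec (G G' : R -> R) : (forall t, derivable_pt_lim G t (G' t)) ->
  (forall t, G' t <= 0) -> forall a b, a <= b -> G b <= G a.
Proof.
  intros HG HG' a b Hab. destruct (Rle_lt_or_eq_dec _ _ Hab) as [Hlt|Heq]; [|subst; lra].
  pose (pr := fun x => exist (fun l => derivable_pt_abs G x l) (G' x) (HG x) : derivable_pt G x).
  destruct (MVT_cor1 G a b pr Hlt) as [c [Hc _]]. simpl in Hc.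
  specialize (HG' c). assert (G' c * (b - a) <= 0) by nra. lra.
Qed.

Lemma incr_single (f g h : Conf d -> R) k c :
  is_partial f k g -> is_partial g c h -> (forall x, h x <= 0) -> k <> c ->
  forall v t s, 0 <= t -> 0 <= s ->
  f (bump (bump v k t) c s) - f (bump v k t) <= f (bump v c s) - f v.
Proof.
  intros Hf Hg Hh Hkc v t s Ht Hs.
  assert (Hg2 : forall w, g (bump w c s) <= g w).
  { intros w. pose proof (mono_dec (fun sg => g (bump w c sg)) (fun sg => h (bump w c sg))
      (partial_along g h c w Hg) (fun sg => Hh _) 0 s Hs) as H. cbv beta in H. rewrite bump_0 in H. exact H. }
  pose proof (mono_dec (fun tau => f (bump (bump v c s) k tau) - f (bump v k tau))
     (fun tau => g (bump (bump v c s) k tau) - g (bump v k tau))) as H.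
  assert (H1 : forall tau, derivable_pt_lim (fun tau => f (bump (bump v c s) k tau) - f (bump v k tau)) tau
     (g (bump (bump v c s) k tau) - g (bump v k tau))).
  { intros tau. apply derivable_pt_lim_minus; apply partial_along; auto. }
  specialize (H H1). clear H1.
  assert (H2 : forall tau, g (bump (bump v c s) k tau) - g (bump v k tau) <= 0).
  { intros tau. rewrite bump_comm. specialize (Hg2 (bump v k tau)). lra. }
  specialize (H H2 0 t Ht). simpl in H. rewrite !bump_0 in H. rewrite bump_comm. lra.
Qed.

Definition ID_prop (f : Conf d -> R) (k : Zd d) : Prop :=
  forall c, c <> k -> forall v t s, 0 <= t -> 0 <= s ->
    f (bump (bump v c t) k s) - f (bump v c t) <= f (bump v k s) - f v.

Lemma ID_list f k : ID_prop f k -> forall C (z w : Conf d) s,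
  (forall i, ~ In i C -> z i = w i) -> (forall i, z i <= w i) -> z k = w k -> 0 <= s ->
  f (bump w k s) - f w <= f (bump z k s) - f z.
Proof.
  intros HID C. induction C as [|c0 C IH]; intros z w s Hout Hle Hk Hs.
  - assert (z = w) by (apply functional_extensionality; intros; apply Hout; auto). subst; lra.
  - set (z' := bump z c0 (w c0 - z c0)).
    assert (Hz' : f (bump w k s) - f w <= f (bump z' k s) - f z').
    { apply IH; auto.
      - intros i Hi. unfold z', bump. destruct Zd_eq_dec. subst; lra. apply Hout. simpl. intros [HH|HH]; [congruence|auto].
      - intros i. unfold z', bump. destruct Zd_eq_dec; subst; [lra|auto].
      - unfold z', bump. destruct Zd_eq_dec; subst; [lra|auto]. }
    destruct (Zd_eq_dec c0 k) as [E|E].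
    + subst c0. unfold z' in Hz'. rewrite Hk, Rminus_diag, bump_0 in Hz'. exact Hz'.
    + pose proof (HID c0 E z (w c0 - z c0) s) as H. specialize (Hle c0). 
      assert (0 <= w c0 - z c0) by lra. specialize (H H0 Hs). fold z' in H. lra.
Qed.

Lemma cmax_comm (a b : Conf d) : cmax a b = cmax b a.
Proof. apply functional_extensionality; intro; unfold cmax; apply Rmax_comm. Qed.
Lemma cmin_comm (a b : Conf d) : cmin a b = cmin b a.
Proof. apply functional_extensionality; intro; unfold cmin; apply Rmin_comm. Qed.

Lemma SM_list f : (forall k, ID_prop f k) -> forall C (a b : Conf d),
  (forall i, ~ In i C -> a i = b i) -> f (cmax a b) + f (cmin a b) <= f a + f b.
Proof.
  intros HID C. induction C as [|c C IH]; intros a b Hout.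
  - assert (a = b) by (apply functional_extensionality; intros; apply Hout; auto). subst.
    assert (cmax b b = b) by (apply functional_extensionality; intro; unfold cmax; apply Rmax_left; lra).
    assert (cmin b b = b) by (apply functional_extensionality; intro; unfold cmin; apply Rmin_left; lra).
    rewrite H, H0; lra.
  - assert (Hmain : forall a b : Conf d, (forall i, ~ In i (c :: C) -> a i = b i) -> a c <= b c ->
      f (cmax a b) + f (cmin a b) <= f a + f b).
    { clear a b Hout. intros a b Hout Hab.
      set (b' := bump b c (a c - b c)).
      assert (Hb'c : b' c = a c). { unfold b', bump. destruct Zd_eq_dec; [lra|congruence]. }
      assert (Hout' : forall i, ~ In i C -> a i = b' i).
      { intros i Hi. unfold b', bump. destruct Zd_eq_dec. subst; lra. apply Hout. simpl. intros [HH|HH]; [congruence|auto]. }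
      pose proof (IH a b' Hout') as H1.
      assert (Emin : cmin a b' = cmin a b).
      { apply functional_extensionality; intro i. unfold cmin, b', bump. destruct Zd_eq_dec.
        - subst. rewrite !Rmin_left; lra.
        - auto. }
      assert (Emax : cmax a b = bump (cmax a b') c (b c - a c)).
      { apply functional_extensionality; intro i. unfold cmax, b', bump. destruct Zd_eq_dec.
        - subst. rewrite Rmax_right, Rmax_left; lra.
        - auto. }
      assert (Eb : b = bump b' c (b c - a c)).
      { apply functional_extensionality; intro i. unfold b', bump. destruct Zd_eq_dec; subst; lra. }
      pose proof (ID_list f c (HID c) C b' (cmax a b') (b c - a c)) as H2.
      assert (H2' : f (bump (cmax a b') c (b c - a c)) - f (cmax a b') <= f (bump b' c (b c - a c)) - f b').
      { apply H2.
        - intros i Hi. unfold cmax. rewrite <- (Hout' i Hi). rewrite Rmax_left; lra.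
        - intros i. unfold cmax. apply Rmax_r.
        - unfold cmax. rewrite Hb'c. rewrite Rmax_left; lra.
        - lra. }
      rewrite <- Emax, <- Eb in H2'. rewrite Emin in H1. lra. }
    destruct (Rle_dec (a c) (b c)).
    + apply Hmain; auto.
    + rewrite cmax_comm, cmin_comm. rewrite (Rplus_comm (f a)). apply Hmain; [|lra].
      intros i Hi; symmetry; auto.
Qed.
End Calc.
Arguments cmax {d}. Arguments cmin {d}.
Definition zrange (a : Z) (n : nat) : list Z := map (fun k => (a + Z.of_nat k)%Z) (seq 0 n).

Lemma in_zrange a n z : (a <= z < a + Z.of_nat n)%Z -> In z (zrange a n).
Proof.
  intros H. unfold zrange. apply in_map_iff. exists (Z.to_nat (z - a)). split. lia.
  apply in_seq. lia.
Qed.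

Fixpoint boxes (R0 : Z) (cs : list Z) : list (list Z) :=
  match cs with
  | [] => [[]]
  | c :: cs' => flat_map (fun z => map (cons z) (boxes R0 cs')) (zrange (c - R0) (Z.to_nat (2 * R0 + 1)))
  end.

Lemma in_boxes R0 cs l : (0 <= R0)%Z -> length l = length cs ->
  (forall m, (Z.abs (nth m l 0 - nth m cs 0) <= R0)%Z) -> In l (boxes R0 cs).
Proof.
  intros HR. revert l; induction cs as [|c cs IH]; intros [|z l] Hlen Hm; simpl length in Hlen; try lia.
  - simpl. auto.
  - cbn [boxes]. apply in_flat_map. exists z. split.
    + apply in_zrange. pose proof (Hm 0%nat) as H0. simpl in H0. rewrite Z2Nat.id by lia. lia.
    + apply in_map. apply IH. lia. intros m. apply (Hm (S m)).
Qed.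

Lemma sumZ_nonneg n f : (forall m, (m < n)%nat -> (0 <= f m)%Z) -> (0 <= sumZ n f)%Z.
Proof.
  revert f; induction n; intros f Hf. rewrite sumZ_0; lia.
  rewrite sumZ_S. pose proof (Hf 0%nat ltac:(lia)).
  pose proof (IHn (fun m => f (S m)) ltac:(intros; apply Hf; lia)). lia.
Qed.

Lemma sumZ_ge_term n f k : (forall m, (m < n)%nat -> (0 <= f m)%Z) -> (k < n)%nat -> (f k <= sumZ n f)%Z.
Proof.
  revert f k; induction n; intros f k Hf Hk. lia.
  rewrite sumZ_S. destruct k.
  - pose proof (sumZ_nonneg n (fun m => f (S m)) ltac:(intros; apply Hf; lia)). lia.
  - pose proof (IHn (fun m => f (S m)) k ltac:(intros; apply Hf; lia) ltac:(lia)). pose proof (Hf 0%nat ltac:(lia)). cbv beta in *. lia.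
Qed.

Section Box.
Variable d : nat.

Lemma ball_list (j : Zd d) (r : R) : exists C : list (Zd d), forall i, in_ball j r i -> In i C.
Proof.
  set (R0 := Z.max 0 (up r)).
  exists (map (fun l => mkZd d (fun m => nth m l 0%Z)) (boxes R0 (proj1_sig j))).
  intros i Hi. apply in_map_iff. exists (proj1_sig i). split.
  - apply Zd_ext. intros m Hm. rewrite comp_mkZd by auto. reflexivity.
  - apply in_boxes. lia. rewrite (proj2_sig i), (proj2_sig j). auto.
    intros m. destruct (Nat.lt_ge_cases m d) as [Hm|Hm].
    + unfold in_ball in Hi. destruct (archimed r) as [Hr _].
      assert (IZR (norm1 (vsub i j)) < IZR (up r)) by lra. apply lt_IZR in H.
      pose proof (sumZ_ge_term d (fun m => Z.abs (comp (vsub i j) m)) m ltac:(intros; lia) Hm).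
      rewrite <- norm1_sum in H0. rewrite comp_vsub in H0. unfold comp in H0. lia.
    + rewrite !nth_overflow; [lia| |]. rewrite (proj2_sig j); auto. rewrite (proj2_sig i); auto.
Qed.

Variable S : Zd d -> Conf d -> R.
Variable r : R.
Variable D2 : Zd d -> Zd d -> Zd d -> Conf d -> R.
Hypothesis Hloc : local_pot S r.
Hypothesis HC2 : C2_pot S r D2.
Hypothesis HD : forall j i k x, i <> k -> D2 j i k x <= 0.

Lemma S_submod j (a b : Conf d) : S j (cmax a b) + S j (cmin a b) <= S j a + S j b.
Proof.
  destruct HC2 as [D1 [H1 [H2 _]]].
  assert (HID : forall k, ID_prop d (S j) k).
  { intros k c Hck v t s Ht Hs. apply (incr_single d (S j) (D1 j c) (D2 j c k)); auto. }
  destruct (ball_list j r) as [C HC].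
  set (a' := fun i => if Rle_dec (IZR (norm1 (vsub i j))) r then a i else 0).
  set (b' := fun i => if Rle_dec (IZR (norm1 (vsub i j))) r then b i else 0).
  assert (Ha : S j a = S j a') by (apply Hloc; intros k Hk; unfold a'; destruct Rle_dec; [auto|contradiction]).
  assert (Hb : S j b = S j b') by (apply Hloc; intros k Hk; unfold b'; destruct Rle_dec; [auto|contradiction]).
  assert (Hmax : S j (cmax a b) = S j (cmax a' b')).
  { apply Hloc; intros k Hk; unfold cmax, a', b'; destruct Rle_dec; [auto|contradiction]. }
  assert (Hmin : S j (cmin a b) = S j (cmin a' b')).
  { apply Hloc; intros k Hk; unfold cmin, a', b'; destruct Rle_dec; [auto|contradiction]. }
  rewrite Ha, Hb, Hmax, Hmin. apply (SM_list d (S j) HID C).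
  intros i Hi. unfold a', b'. destruct Rle_dec; auto. exfalso. apply Hi, HC. exact r0.
Qed.
End Box.
Fixpoint sins (v : R) (l : list R) : list R :=
  match l with
  | [] => [v]
  | w :: ws => Rmax v w :: sins (Rmin v w) ws
  end.
Definition ssort (l : list R) : list R := fold_right sins [] l.

Lemma sins_perm v l : Permutation (sins v l) (v :: l).
Proof.
  revert v; induction l as [|w ws IH]; intros v. simpl; auto.
  simpl. eapply perm_trans. apply perm_skip, IH.
  unfold Rmax, Rmin. destruct Rle_dec.
  - apply perm_swap.
  - apply Permutation_refl.
Qed.

Lemma ssort_perm_self l : Permutation (ssort l) l.
Proof.
  induction l; simpl. auto. eapply perm_trans. apply sins_perm. apply perm_skip, IHl.
Qed.

Lemma sins_sorted v l : StronglySorted Rge l -> StronglySorted Rge (sins v l).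
Proof.
  revert v; induction l as [|w ws IH]; intros v Hs. simpl. repeat constructor.
  simpl. inversion Hs; subst. constructor. apply IH; auto.
  apply Forall_forall. intros x Hx. apply (Permutation_in _ (sins_perm _ _)) in Hx.
  destruct Hx as [Hx|Hx].
  - subst. unfold Rmax, Rmin; destruct Rle_dec; lra.
  - rewrite Forall_forall in H2. specialize (H2 x Hx). unfold Rmax; destruct Rle_dec; lra.
Qed.

Lemma ssort_sorted l : StronglySorted Rge (ssort l).
Proof. induction l; simpl. constructor. apply sins_sorted; auto. Qed.

Lemma sorted_perm_eq l1 l2 : StronglySorted Rge l1 -> StronglySorted Rge l2 -> Permutation l1 l2 -> l1 = l2.
Proof.
  revert l2; induction l1 as [|a t1 IH]; intros l2 H1 H2 HP.
  - symmetry. apply Permutation_nil, HP.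
  - destruct l2 as [|b t2]. apply Permutation_sym, Permutation_nil in HP. discriminate.
    inversion H1; inversion H2; subst.
    assert (a = b).
    { assert (Ha : In a (b :: t2)) by (eapply Permutation_in; [exact HP|left; auto]).
      assert (Hb : In b (a :: t1)) by (eapply Permutation_in; [apply Permutation_sym, HP|left; auto]).
      destruct Ha as [Ha|Ha]; [auto|]. destruct Hb as [Hb|Hb]; [auto|].
      rewrite Forall_forall in H4, H8. specialize (H4 b Hb). specialize (H8 a Ha). lra. }
    subst b. f_equal. apply IH; auto. eapply Permutation_cons_inv; eauto.
Qed.

Lemma ssort_perm l1 l2 : Permutation l1 l2 -> ssort l1 = ssort l2.
Proof.
  intros HP. apply sorted_perm_eq; try apply ssort_sorted.
  eapply perm_trans. apply ssort_perm_self. eapply perm_trans. exact HP. apply Permutation_sym, ssort_perm_self.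
Qed.

Lemma ssort_length l : length (ssort l) = length l.
Proof. apply Permutation_length, ssort_perm_self. Qed.

Lemma ssort_shift c l : ssort (map (fun v => c + v) l) = map (fun v => c + v) (ssort l).
Proof.
  assert (Hs : forall v l, sins (c + v) (map (fun v => c + v) l) = map (fun v => c + v) (sins v l)).
  { intros v0 l0; revert v0; induction l0 as [|w ws IH]; intros v0; simpl. auto.
    f_equal. unfold Rmax; destruct Rle_dec, Rle_dec; lra.
    rewrite <- IH. f_equal. unfold Rmin; destruct Rle_dec, Rle_dec; lra. }
  induction l; simpl. auto. rewrite IHl, Hs. auto.
Qed.

Definition nzb (v : R) : bool := if Req_dec_T v 0 then false else true.

Lemma sins_zeros x k : 0 <= x -> sins x (repeat 0 k) = x :: repeat 0 k.
Proof.
  revert x; induction k; intros x Hx. auto.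
  simpl. rewrite IHk by (unfold Rmin; destruct Rle_dec; lra).
  f_equal. unfold Rmax; destruct Rle_dec; lra. f_equal. unfold Rmin; destruct Rle_dec; lra.
Qed.

Lemma sins_app_zeros x l k : 0 <= x -> Forall (fun v => 0 <= v) l ->
  sins x (l ++ repeat 0 k) = sins x l ++ repeat 0 k.
Proof.
  revert x; induction l as [|w ws IH]; intros x Hx Hl; simpl. apply sins_zeros; auto.
  inversion Hl; subst. f_equal. apply IH; auto. unfold Rmin; destruct Rle_dec; lra.
Qed.

Lemma sins_zero_end l : Forall (fun v => 0 <= v) l -> sins 0 l = l ++ [0].
Proof.
  induction l as [|w ws IH]; intros Hl; simpl. auto. inversion Hl; subst.
  f_equal. unfold Rmax; destruct Rle_dec; lra.
  replace (Rmin 0 w) with 0 by (unfold Rmin; destruct Rle_dec; lra). auto.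
Qed.

Lemma Forall_ssort (P : R -> Prop) l : Forall P l -> Forall P (ssort l).
Proof.
  intros H. rewrite Forall_forall in *. intros x Hx. apply H.
  eapply Permutation_in. apply ssort_perm_self. exact Hx.
Qed.

Lemma Forall_filter (P : R -> Prop) f l : Forall P l -> Forall P (filter f l).
Proof. intros H. rewrite Forall_forall in *. intros x Hx. apply filter_In in Hx. apply H; tauto. Qed.

Lemma ssort_pad L : Forall (fun v => 0 <= v) L ->
  exists k, ssort L = ssort (filter nzb L) ++ repeat 0 k.
Proof.
  induction L as [|x L IH]; intros HL. exists 0%nat. simpl. auto.
  inversion HL; subst. destruct (IH H2) as [k Hk]. simpl. rewrite Hk.
  unfold nzb at 2. destruct (Req_dec_T x 0).
  - subst. exists (S k). rewrite sins_app_zeros by (auto; apply Forall_ssort, Forall_filter; auto).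
    rewrite sins_zero_end by (apply Forall_ssort, Forall_filter; auto).
    rewrite <- app_assoc. auto.
  - exists k. simpl. rewrite sins_app_zeros; auto. apply Forall_ssort, Forall_filter; auto.
Qed.

Lemma nth_app_zeros l k r : nth r (l ++ repeat 0 k) 0 = nth r l 0.
Proof.
  destruct (Nat.lt_ge_cases r (length l)).
  - apply app_nth1; auto.
  - rewrite app_nth2 by auto. rewrite nth_overflow with (l := l) by auto.
    destruct (Nat.lt_ge_cases (r - length l) k).
    + apply nth_repeat.
    + apply nth_overflow. rewrite repeat_length. auto.
Qed.

Lemma ssort_nz_eq L1 L2 : Forall (fun v => 0 <= v) L1 -> Forall (fun v => 0 <= v) L2 ->
  Permutation (filter nzb L1) (filter nzb L2) -> forall r, nth r (ssort L1) 0 = nth r (ssort L2) 0.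
Proof.
  intros H1 H2 HP r. destruct (ssort_pad L1 H1) as [k1 E1]. destruct (ssort_pad L2 H2) as [k2 E2].
  rewrite E1, E2, !nth_app_zeros. rewrite (ssort_perm _ _ HP). auto.
Qed.

Section CSort.
Variable d : nat.
Fixpoint cins (a : Conf d) (os : list (Conf d)) : list (Conf d) :=
  match os with
  | [] => [a]
  | o :: os' => cmax a o :: cins (cmin a o) os'
  end.
Definition csort (A : list (Conf d)) : list (Conf d) := fold_right cins [] A.

Lemma cins_coord a os i : map (fun o => o i) (cins a os) = sins (a i) (map (fun o => o i) os).
Proof. revert a; induction os; intros; simpl; auto. f_equal. rewrite IHos. auto. Qed.
Lemma csort_coord A i : map (fun o => o i) (csort A) = ssort (map (fun a => a i) A).
Proof. induction A; simpl; auto. rewrite cins_coord, IHA. auto. Qed.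
Lemma csort_length A : length (csort A) = length A.
Proof.
  induction A; simpl; auto. rewrite <- IHA. clear IHA. generalize (csort A) a. clear.
  induction l; intros; simpl; auto.
Qed.

Definition lsum {X : Type} (f : X -> R) (l : list X) : R := fold_right (fun a acc => f a + acc) 0 l.

Lemma csort_sum (f : Conf d -> R) : (forall a b, f (cmax a b) + f (cmin a b) <= f a + f b) ->
  forall A, lsum f (csort A) <= lsum f A.
Proof.
  intros Hf. assert (Hi : forall a os, lsum f (cins a os) <= f a + lsum f os).
  { intros a os; revert a; induction os; intros; simpl. lra.
    specialize (IHos (cmin a0 a)). specialize (Hf a0 a). lra. }
  induction A; simpl. lra. specialize (Hi a (csort A)). lra.
Qed.
End CSort.
Lemma lsum_app {X} (f : X -> R) l1 l2 : lsum f (l1 ++ l2) = lsum f l1 + lsum f l2.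
Proof. induction l1; simpl. lra. rewrite IHl1. lra. Qed.
Lemma lsum_map {X Y} (f : Y -> R) (g : X -> Y) l : lsum f (map g l) = lsum (fun a => f (g a)) l.
Proof. induction l; simpl; auto. rewrite IHl; auto. Qed.
Lemma lsum_ext_in {X} (f g : X -> R) l : (forall a, In a l -> f a = g a) -> lsum f l = lsum g l.
Proof. induction l; intros H; simpl; auto. rewrite H, IHl; auto. intros; apply H; simpl; auto. left; auto. Qed.
Lemma lsum_le_in {X} (f g : X -> R) l : (forall a, In a l -> f a <= g a) -> lsum f l <= lsum g l.
Proof. induction l; intros H; simpl. lra. pose proof (H a (or_introl eq_refl)). pose proof (IHl (fun b Hb => H b (or_intror Hb))). lra. Qed.
Lemma lsum_minus {X} (f g : X -> R) l : lsum (fun a => f a - g a) l = lsum f l - lsum g l.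
Proof. induction l; simpl. lra. rewrite IHl. lra. Qed.
Lemma lsum_plus {X} (f g : X -> R) l : lsum (fun a => f a + g a) l = lsum f l + lsum g l.
Proof. induction l; simpl. lra. rewrite IHl. lra. Qed.
Lemma lsum_zero {X} (l : list X) : lsum (fun _ => 0) l = 0.
Proof. induction l; simpl; auto. rewrite IHl; lra. Qed.
Lemma lsum_swap {X Y} (f : X -> Y -> R) la lb :
  lsum (fun a => lsum (fun b => f a b) lb) la = lsum (fun b => lsum (fun a => f a b) la) lb.
Proof.
  induction la; simpl. rewrite lsum_zero; auto.
  rewrite IHla, <- lsum_plus. auto.
Qed.
Lemma lsum_nonneg {X} (f : X -> R) l : (forall a, In a l -> 0 <= f a) -> 0 <= lsum f l.
Proof. intros H. rewrite <- (lsum_zero l). apply lsum_le_in. auto. Qed.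

Lemma map_nth_seq_self {X} (l : list X) dflt : map (fun r => nth r l dflt) (seq 0 (length l)) = l.
Proof.
  induction l; simpl; auto. f_equal. rewrite <- seq_shift, map_map. simpl. auto.
Qed.

Lemma NoDup_map_on {X Y} (f : X -> Y) l : NoDup l -> (forall a b, In a l -> In b l -> f a = f b -> a = b) ->
  NoDup (map f l).
Proof.
  induction l; intros Hn Hi; simpl. constructor. inversion Hn; subst. constructor.
  - intros Hin. apply in_map_iff in Hin as [b [Hb1 Hb2]].
    assert (b = a) by (apply Hi; simpl; auto). subst; contradiction.
  - apply IHl; auto. intros; apply Hi; simpl; auto.
Qed.

Lemma filter_map_comm {X Y} (f : Y -> bool) (g : X -> Y) l : filter f (map g l) = map g (filter (fun a => f (g a)) l).
Proof. induction l; simpl; auto. destruct (f (g a)); simpl; rewrite IHl; auto. Qed.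

Lemma nzb_true v : nzb v = true <-> v <> 0.
Proof. unfold nzb; destruct Req_dec_T; split; intros; try congruence; auto. Qed.

Section Core.
Variable d : nat.
Variable S : Zd d -> Conf d -> R.
Variable r : R.
Variable p : nat -> Zd d.
Variable q : nat -> Z.
Hypothesis Hloc : local_pot S r.
Hypothesis Hsub : forall j a b, S j (cmax a b) + S j (cmin a b) <= S j a + S j b.
Hypothesis HB : forall j k l x, S j (tau k l x) = S (vadd j k) x.
Hypothesis indep : lin_indep p.
Hypothesis span : forall v : nat -> R, exists s : nat -> R,
    forall m, (m < d)%nat -> sumR d (fun j => s j * IZR (comp (p j) m)) = v m.
Variable Lp : list (Zd d).
Hypothesis HLpN : NoDup Lp.
Hypothesis HLp : forall z, In z Lp <-> in_Bp p z.
Variable x : Conf d.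
Hypothesis Hx : in_Xpq p q x.
Hypothesis Hmin : forall y, in_Xpq p q y -> W_B S Lp x <= W_B S Lp y.

Notation P := (Pv d p).
Definition Qv (n : nat -> Z) : Z := sumZ d (fun j => n j * q j)%Z.

Definition Gp (lam : Zd d) (c : Z) : Prop := forall i, x (vadd i lam) + IZR c = x i.

Lemma Gp_zero : Gp (vzero d) 0.
Proof. intros i. rewrite vadd_zero. simpl. lra. Qed.
Lemma Gp_add l1 c1 l2 c2 : Gp l1 c1 -> Gp l2 c2 -> Gp (vadd l1 l2) (c1 + c2).
Proof. intros H1 H2 i. rewrite <- vadd_assoc, plus_IZR. specialize (H2 (vadd i l1)). specialize (H1 i). lra. Qed.
Lemma Gp_sub l1 c1 l2 c2 : Gp l1 c1 -> Gp l2 c2 -> Gp (vsub l1 l2) (c1 - c2).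
Proof.
  intros H1 H2 i. rewrite minus_IZR. specialize (H2 (vadd i (vsub l1 l2))). specialize (H1 i).
  rewrite vadd_assoc in H2.
  replace (vadd (vsub l1 l2) l2) with l1 in H2 by (apply Zd_ext; intros; rewrite comp_vadd, comp_vsub; lia).
  lra.
Qed.

Lemma Qv_ext n1 n2 : (forall j, (j < d)%nat -> n1 j = n2 j) -> Qv n1 = Qv n2.
Proof. intros H; apply sumZ_ext; intros; rewrite H; auto. Qed.

Lemma Gp_unit k c : (k < d)%nat -> Gp (P (fun j => c * unitv k j)%Z) (Qv (fun j => c * unitv k j)%Z).
Proof.
  intros Hk. induction c using Z.peano_ind.
  - rewrite (Pv_ext _ _ _ (fun _ => 0%Z)) by (intros; lia). rewrite (Qv_ext _ (fun _ => 0%Z)) by (intros; lia).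
    rewrite Pv_zero. replace (Qv (fun _ => 0%Z)) with 0%Z. apply Gp_zero.
    unfold Qv. symmetry. rewrite (sumZ_ext _ _ (fun _ => 0%Z)) by (intros; lia). clear. induction d; auto. rewrite sumZ_S; lia.
  - rewrite (Pv_ext _ _ _ (fun j => c * unitv k j + unitv k j)%Z) by (intros; lia).
    rewrite (Qv_ext _ (fun j => c * unitv k j + unitv k j)%Z) by (intros; lia).
    rewrite Pv_add, Pv_unit by auto. unfold Qv. rewrite (sumZ_ext _ _ (fun j => c * unitv k j * q j + unitv k j * q j)%Z) by (intros; lia).
    rewrite sumZ_add. apply Gp_add; auto.
    replace (sumZ d (fun j => unitv k j * q j)%Z) with (q k).
    + intros i. apply Hx; auto.
    + rewrite (sumZ_ext _ _ (fun j => if Nat.eq_dec j k then q k else 0%Z)). symmetry; apply sumZ_delta; auto.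
      intros. unfold unitv. destruct Nat.eq_dec; subst; lia.
  - rewrite (Pv_ext _ _ _ (fun j => c * unitv k j - unitv k j)%Z) by (intros; lia).
    rewrite (Qv_ext _ (fun j => c * unitv k j - unitv k j)%Z) by (intros; lia).
    rewrite Pv_sub, Pv_unit by auto. unfold Qv. rewrite (sumZ_ext _ _ (fun j => c * unitv k j * q j + - (unitv k j * q j))%Z) by (intros; lia).
    rewrite sumZ_add, sumZ_opp. replace (sumZ d (fun j => c * unitv k j * q j)%Z + - sumZ d (fun j => unitv k j * q j)%Z)%Z
      with (sumZ d (fun j => c * unitv k j * q j)%Z - sumZ d (fun j => unitv k j * q j)%Z)%Z by lia.
    apply Gp_sub; auto.
    replace (sumZ d (fun j => unitv k j * q j)%Z) with (q k).
    + intros i. apply Hx; auto.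
    + rewrite (sumZ_ext _ _ (fun j => if Nat.eq_dec j k then q k else 0%Z)). symmetry; apply sumZ_delta; auto.
      intros. unfold unitv. destruct Nat.eq_dec; subst; lia.
Qed.

Lemma T2 n : Gp (P n) (Qv n).
Proof.
  set (tr := fun k j => if Nat.ltb j k then n j else 0%Z).
  assert (forall k, (k <= d)%nat -> Gp (P (tr k)) (Qv (tr k))).
  { induction k; intros Hk.
    - rewrite (Pv_ext _ _ _ (fun _ => 0%Z)) by (intros; unfold tr; simpl; lia).
      rewrite (Qv_ext _ (fun _ => 0%Z)) by (intros; unfold tr; simpl; lia).
      rewrite Pv_zero. replace (Qv (fun _ => 0%Z)) with 0%Z. apply Gp_zero.
      unfold Qv. symmetry. rewrite (sumZ_ext _ _ (fun _ => 0%Z)) by (intros; lia). clear. induction d; auto. rewrite sumZ_S; lia.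
    - assert (E : forall j, tr (Datatypes.S k) j = (tr k j + n k * unitv k j)%Z).
      { intros j. unfold tr, unitv. destruct (Nat.ltb_spec j (Datatypes.S k)), (Nat.ltb_spec j k), Nat.eq_dec; subst; lia. }
      rewrite (Pv_ext _ _ _ _ (fun j _ => E j)), (Qv_ext _ _ (fun j _ => E j)).
      rewrite Pv_add. unfold Qv at 1. rewrite (sumZ_ext _ _ (fun j => tr k j * q j + n k * unitv k j * q j)%Z) by (intros; lia).
      rewrite sumZ_add. apply Gp_add. apply IHk; lia. apply Gp_unit. lia. }
  rewrite (Pv_ext _ _ n (tr d)), (Qv_ext n (tr d)). apply H; lia.
  all: intros j Hj; unfold tr; destruct (Nat.ltb_spec j d); lia.
Qed.

Lemma dec_sig v : { un : Zd d * (nat -> Z) | In (fst un) Lp /\ v = vadd (fst un) (P (snd un)) }.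
Proof.
  apply constructive_indefinite_description.
  destruct (dec_exists d p span Lp HLp v) as [u [n H]]. exists (u, n). exact H.
Qed.
Definition rep v := fst (proj1_sig (dec_sig v)).
Definition nrep v := snd (proj1_sig (dec_sig v)).
Lemma rep_in v : In (rep v) Lp.
Proof. unfold rep. destruct (dec_sig v) as [un H]. simpl. tauto. Qed.
Lemma rep_eq v : v = vadd (rep v) (P (nrep v)).
Proof. unfold rep, nrep. destruct (dec_sig v) as [un H]. simpl. tauto. Qed.
Lemma rep_uniq v u n : In u Lp -> v = vadd u (P n) -> rep v = u /\ P (nrep v) = P n.
Proof.
  intros Hu E. pose proof (rep_eq v) as H.
  assert (H' : vadd (rep v) (P (nrep v)) = vadd u (P n)) by (rewrite <- H; auto).
  destruct (dec_unique d p indep Lp HLp (rep v) u (nrep v) n (rep_in v) Hu H') as [H1 H2].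
  split; auto. apply Pv_ext; auto.
Qed.
Lemma rep_shift v n : rep (vadd v (P n)) = rep v.
Proof.
  apply (rep_uniq _ _ (fun j => nrep v j + n j)%Z (rep_in v)).
  rewrite Pv_add, <- vadd_assoc, <- rep_eq. auto.
Qed.
Lemma rep_same a b : rep a = rep b -> a = vadd b (P (fun j => nrep a j - nrep b j)%Z).
Proof.
  intros E. rewrite Pv_sub. pose proof (rep_eq a). pose proof (rep_eq b).
  apply Zd_ext; intros m Hm. rewrite H at 1. rewrite H0 at 1. rewrite E.
  rewrite !comp_vadd, comp_vsub. lia.
Qed.

Lemma tau_Pv_x n : tau (P n) (Qv n) x = x.
Proof. apply functional_extensionality; intro i. apply T2. Qed.

Definition yn (y : Conf d) n : Conf d := fun i => y (vadd i (P n)).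
Lemma tau_Pv_xy y n : tau (P n) (Qv n) (conf_add x y) = conf_add x (yn y n).
Proof.
  apply functional_extensionality; intro i. unfold tau, conf_add, yn.
  pose proof (T2 n i). lra.
Qed.

Section Pert.
Variable B : list (Zd d).
Variable y : Conf d.
Hypothesis HBN : NoDup B.
Hypothesis Hy : forall i, y i <> 0 -> in_interior r B i.
Hypothesis Hy0 : forall i, 0 <= y i.

Definition cls i := filter (fun b => if Zd_eq_dec (rep b) (rep i) then true else false) B.
Definition L1 i := map y (cls i).
Definition ost (k : nat) : Conf d := fun i => x i + nth k (ssort (L1 i)) 0.

Lemma ost_per k : in_Xpq p q (ost k).
Proof.
  intros j Hj i. unfold tau, ost. pose proof (Hx j Hj i) as Hxi. unfold tau in Hxi.
  assert (L1 (vadd i (p j)) = L1 i).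
  { unfold L1, cls. rewrite <- (Pv_unit d p j Hj), rep_shift. auto. }
  rewrite H. lra.
Qed.

Definition Bj j := filter (fun b => if Zd_eq_dec (rep b) j then true else false) B.

Lemma perm_key j k : In j Lp -> in_ball j r k ->
  Permutation (filter nzb (L1 k)) (filter nzb (map (fun b => y (vadd k (P (nrep b)))) (Bj j))).
Proof.
  intros Hj Hk. unfold L1. rewrite !filter_map_comm.
  rewrite <- (map_map (fun b => vadd k (P (nrep b))) y).
  apply Permutation_map.
  rewrite <- (filter_map_comm (fun v => nzb (y v)) (fun b => vadd k (P (nrep b)))).
  cbv beta.
  apply NoDup_Permutation.
  - apply NoDup_filter. unfold cls. apply NoDup_filter. auto.
  - apply NoDup_filter. apply NoDup_map_on. unfold Bj; apply NoDup_filter; auto.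
    intros a b Ha Hb E. unfold Bj in Ha, Hb. apply filter_In in Ha, Hb.
    destruct Ha as [Ha Ha'], Hb as [Hb Hb'].
    destruct (Zd_eq_dec (rep a) j); [|discriminate]. destruct (Zd_eq_dec (rep b) j); [|discriminate].
    assert (P (nrep a) = P (nrep b)).
    { apply Zd_ext; intros m Hm. apply (f_equal (fun v => comp v m)) in E. rewrite !comp_vadd in E. lia. }
    rewrite (rep_eq a), (rep_eq b), e, e0, H. auto.
  - intros z. rewrite !filter_In. split.
    + intros [Hz Hnz]. unfold cls in Hz. apply filter_In in Hz as [HzB Hzr].
      destruct (Zd_eq_dec (rep z) (rep k)) as [Ezk|]; [|discriminate].
      apply nzb_true in Hnz.
      set (m := fun j0 => (nrep z j0 - nrep k j0)%Z).
      pose proof (rep_same z k Ezk) as Ez. fold m in Ez.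
      set (b := vadd j (P m)).
      assert (HbB : In b B).
      { destruct (Hy z Hnz) as [_ Hint]. apply Hint. unfold in_ball, b. rewrite Ez.
        rewrite norm1_vsub_shift, norm1_vsub_sym. exact Hk. }
      destruct (rep_uniq b j m Hj eq_refl) as [Hrb Hnb].
      split.
      * apply in_map_iff. exists b. split. rewrite Hnb. auto.
        unfold Bj. apply filter_In. split; auto. destruct Zd_eq_dec; [auto|contradiction].
      * apply nzb_true. auto.
    + intros [Hz Hnz]. apply in_map_iff in Hz as [b [Hb1 Hb2]]. subst z.
      apply nzb_true in Hnz. split; [|apply nzb_true; auto].
      unfold cls. apply filter_In. split.
      * destruct (Hy _ Hnz); auto.
      * rewrite rep_shift. destruct Zd_eq_dec; auto.
Qed.

Lemma per_site j : In j Lp ->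
  lsum (fun k => S j (ost k) - S j x) (seq 0 (length B)) <=
  lsum (fun b => S j (conf_add x (yn y (nrep b))) - S j x) (Bj j).
Proof.
  intros Hj.
  set (A := map (fun b => conf_add x (yn y (nrep b))) (Bj j)).
  set (m := length (Bj j)).
  assert (HmN : (m <= length B)%nat) by (unfold m, Bj; apply filter_length_le).
  assert (Hagree : forall k, in_ball j r k -> forall r0,
     ((r0 < m)%nat -> ost r0 k = nth r0 (csort d A) x k) /\ ((m <= r0)%nat -> ost r0 k = x k)).
  { intros k Hk r0.
    set (L2 := map (fun b => y (vadd k (P (nrep b)))) (Bj j)).
    assert (HL : nth r0 (ssort (L1 k)) 0 = nth r0 (ssort L2) 0).
    { apply ssort_nz_eq. unfold L1. apply Forall_forall. intros v Hv. apply in_map_iff in Hv as [? [<- _]]. auto.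
      unfold L2. apply Forall_forall. intros v Hv. apply in_map_iff in Hv as [? [<- _]]. auto.
      apply perm_key; auto. }
    assert (HL2 : length L2 = m) by (unfold L2, m; apply length_map).
    split.
    - intros Hr0. unfold ost. rewrite HL.
      assert (E1 : nth r0 (csort d A) x k = nth r0 (map (fun o => o k) (csort d A)) (x k)).
      { change (x k) with ((fun o : Conf d => o k) x). rewrite map_nth. reflexivity. }
      rewrite E1, csort_coord.
      assert (E2 : map (fun a => a k) A = map (fun v => x k + v) L2).
      { unfold A, L2. rewrite !map_map. apply map_ext. intros b. unfold conf_add, yn. auto. }
      rewrite E2, ssort_shift.
      assert (E3 : nth r0 (map (fun v => x k + v) (ssort L2)) (x k) = nth r0 (map (fun v => x k + v) (ssort L2)) ((fun v => x k + v) 0)).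
      { apply nth_indep. rewrite length_map, ssort_length. lia. }
      rewrite E3, map_nth. auto.
    - intros Hr0. unfold ost. rewrite HL. rewrite nth_overflow. lra. rewrite ssort_length. lia. }
  replace (length B) with (m + (length B - m))%nat by lia.
  rewrite seq_app, lsum_app.
  rewrite (lsum_ext_in _ (fun _ => 0) (seq (0 + m) _)).
  2:{ intros k Hk. apply in_seq in Hk. rewrite (Hloc j (ost k) x). lra.
      intros i Hi. apply (Hagree i Hi k). lia. }
  rewrite lsum_zero, Rplus_0_r.
  rewrite (lsum_ext_in _ (fun k => S j (nth k (csort d A) x) - S j x) (seq 0 m)).
  2:{ intros k Hk. apply in_seq in Hk. rewrite (Hloc j (ost k) (nth k (csort d A) x)). auto.
      intros i Hi. apply (Hagree i Hi k). lia. }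
  rewrite <- (lsum_map (fun o => S j o - S j x) (fun k => nth k (csort d A) x)).
  replace m with (length (csort d A)) by (rewrite csort_length; unfold A; rewrite length_map; auto).
  rewrite map_nth_seq_self.
  rewrite lsum_minus.
  replace (lsum (fun b => S j (conf_add x (yn y (nrep b))) - S j x) (Bj j))
    with (lsum (S j) A - lsum (fun _ => S j x) A).
  - pose proof (csort_sum d (S j) (Hsub j) A).
    replace (lsum (fun _ : Conf d => S j x) (csort d A)) with (lsum (fun _ : Conf d => S j x) A). lra.
    clear. generalize (csort_length d A). generalize (csort d A). intros l. revert l. induction A; intros [|b l] Hl; simpl in *; try lia; auto.
    rewrite (IHA l) by lia; reflexivity.
  - unfold A. rewrite !lsum_map, <- lsum_minus. auto.
Qed.

Lemma lsum_delta (u : Zd d) c l : NoDup l -> In u l ->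
  lsum (fun j => if Zd_eq_dec u j then c else 0) l = c.
Proof.
  induction l; intros Hn Hu; simpl. contradiction. inversion Hn; subst.
  destruct Zd_eq_dec.
  - subst. rewrite (lsum_ext_in _ (fun _ => 0)). rewrite lsum_zero; lra.
    intros b Hb. destruct Zd_eq_dec; auto. subst; contradiction.
  - destruct Hu; [congruence|]. rewrite IHl; auto. lra.
Qed.

Lemma regroup (D : Zd d -> R) : forall B', lsum D B' = lsum (fun j => lsum D
   (filter (fun b => if Zd_eq_dec (rep b) j then true else false) B')) Lp.
Proof.
  induction B' as [|b B' IH]; simpl. rewrite lsum_zero; auto.
  rewrite (lsum_ext_in _ (fun j => (if Zd_eq_dec (rep b) j then D b else 0) +
     lsum D (filter (fun b0 => if Zd_eq_dec (rep b0) j then true else false) B')) Lp).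
  - rewrite lsum_plus, lsum_delta, IH; auto. apply rep_in.
  - intros j _. destruct Zd_eq_dec; simpl; auto. lra.
Qed.

Lemma core_ineq : W_B S B x <= W_B S B (conf_add x y).
Proof.
  assert (H0 : 0 <= lsum (fun k => W_B S Lp (ost k) - W_B S Lp x) (seq 0 (length B))).
  { apply lsum_nonneg. intros k _. pose proof (Hmin (ost k) (ost_per k)). lra. }
  assert (E1 : lsum (fun k => W_B S Lp (ost k) - W_B S Lp x) (seq 0 (length B)) =
     lsum (fun j => lsum (fun k => S j (ost k) - S j x) (seq 0 (length B))) Lp).
  { rewrite lsum_swap. apply lsum_ext_in. intros k _. unfold W_B. fold (lsum (fun j => S j (ost k)) Lp).
    fold (lsum (fun j => S j x) Lp). rewrite lsum_minus. auto. }
  assert (E2 : lsum (fun j => lsum (fun b => S j (conf_add x (yn y (nrep b))) - S j x) (Bj j)) Lp =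
     lsum (fun b => S b (conf_add x y) - S b x) B).
  { rewrite (regroup _ B). apply lsum_ext_in. intros j Hj. apply lsum_ext_in. intros b Hb.
    unfold Bj in Hb. apply filter_In in Hb as [_ Hb]. destruct Zd_eq_dec as [Ej|]; [|discriminate].
    pose proof (rep_eq b) as Eb. rewrite Ej in Eb. rewrite Eb at 2 3.
    rewrite <- (HB j (P (nrep b)) (Qv (nrep b)) (conf_add x y)), <- (HB j (P (nrep b)) (Qv (nrep b)) x), tau_Pv_xy, tau_Pv_x. auto. }
  assert (H1 : lsum (fun j => lsum (fun k => S j (ost k) - S j x) (seq 0 (length B))) Lp <=
     lsum (fun j => lsum (fun b => S j (conf_add x (yn y (nrep b))) - S j x) (Bj j)) Lp).
  { apply lsum_le_in. intros j Hj. apply per_site; auto. }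
  rewrite E2, lsum_minus in H1. unfold W_B.
  fold (lsum (fun j => S j x) B). fold (lsum (fun j => S j (conf_add x y)) B). lra.
Qed.
End Pert.
End Core.
Definition negc {d} (z : Conf d) : Conf d := fun i => - z i.

Lemma WB_submod {d} (S : Zd d -> Conf d -> R) B :
  (forall j a b, S j (cmax a b) + S j (cmin a b) <= S j a + S j b) ->
  forall a b, W_B S B (cmax a b) + W_B S B (cmin a b) <= W_B S B a + W_B S B b.
Proof.
  intros H a b. induction B; simpl. lra. specialize (H a0 a b). lra.
Qed.

Lemma WB_ext {d} (S S' : Zd d -> Conf d -> R) B z z' :
  (forall j, S j z = S' j z') -> W_B S B z = W_B S' B z'.
Proof. intros H. induction B; simpl; auto. rewrite H, IHB; auto. Qed.

Theorem mainTheorem5 (d : nat) (S : Zd d -> Conf d -> R) (r : R)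
  (D2 : Zd d -> Zd d -> Zd d -> Conf d -> R) :
  (* (A) *)
  0 < r -> local_pot S r -> C2_pot S r D2 ->
  (* (B) *)
  (forall j k l x, S j (tau k l x) = S (vadd j k) x) ->
  (* (C) *)
  (forall j, exists m, forall x, m <= S j x) ->
  (forall j k, norm1 (vsub k j) = 1%Z -> forall M, exists R0,
      forall x, R0 < Rabs (x k - x j) -> M < S j x) ->
  (* (D) *)
  (forall j i k x, i <> k -> D2 j i k x <= 0) ->
  (forall i k x, norm1 (vsub i k) = 1%Z -> D2 i i k x < 0) ->
  (* (E) *)
  (exists C, forall j i k x, Rabs (D2 j i k x) <= C) ->
  forall (p : nat -> Zd d) (q : nat -> Z), lin_indep p ->
  (* Lp enumerates the finite set B_p, so W_{p,q} = W_B S Lp *)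
  forall Lp : list (Zd d), NoDup Lp -> (forall z, In z Lp <-> in_Bp p z) ->
  forall x : Conf d, in_Xpq p q x ->
    (forall y, in_Xpq p q y -> W_B S Lp x <= W_B S Lp y) ->
    global_minimizer S r x.
Proof.
  intros Hr Hloc HC2 HB _ _ HD _ _ p q Hind Lp HLpN HLp x Hx Hmin.
  assert (Hsub := S_submod d S r D2 Hloc HC2 HD).
  assert (span : forall v : nat -> R, exists s : nat -> R,
    forall m, (m < d)%nat -> sumR d (fun j => s j * IZR (Defs.comp (p j) m)) = v m).
  { apply (LinAlg.span_of_indep d (fun j m => IZR (Defs.comp (p j) m))). exact Hind. }
  intros B y HBN Hy.
  set (yp := fun i => Rmax (y i) 0). set (ym := fun i => Rmin (y i) 0).
  assert (H1 : W_B S B x <= W_B S B (conf_add x yp)).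
  { apply (core_ineq d S r p q Hloc Hsub HB Hind span Lp HLpN HLp x Hx Hmin B yp HBN).
    - intros i Hi. apply Hy. unfold yp in Hi. intros E. rewrite E in Hi. apply Hi. unfold Rmax; destruct Rle_dec; lra.
    - intros i. unfold yp. apply Rmax_r. }
  assert (H2 : W_B S B x <= W_B S B (conf_add x ym)).
  { set (S' := fun j (z : Conf d) => S j (negc z)).
    assert (Hloc' : local_pot S' r).
    { intros j a b Hab. unfold S'. apply Hloc. intros k Hk. unfold negc. rewrite Hab; auto. }
    assert (Hsub' : forall j a b, S' j (cmax a b) + S' j (cmin a b) <= S' j a + S' j b).
    { intros j a b. unfold S'.
      replace (negc (cmax a b)) with (cmin (negc a) (negc b)).
      replace (negc (cmin a b)) with (cmax (negc a) (negc b)).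
      pose proof (Hsub j (negc a) (negc b)). lra.
      all: apply functional_extensionality; intro i; unfold negc, cmax, cmin.
      rewrite Ropp_Rmin; auto. rewrite Ropp_Rmax; auto. }
    assert (HB' : forall j k l z, S' j (tau k l z) = S' (vadd j k) z).
    { intros j k l z. unfold S'. rewrite <- (HB j k (- l)%Z). f_equal.
      apply functional_extensionality; intro i. unfold negc, tau. rewrite opp_IZR. lra. }
    assert (Hx' : in_Xpq p (fun j => - q j)%Z (negc x)).
    { intros j Hj i. unfold tau, negc. rewrite opp_IZR. pose proof (Hx j Hj i). unfold tau in H. lra. }
    assert (Hmin' : forall y', in_Xpq p (fun j => - q j)%Z y' -> W_B S' Lp (negc x) <= W_B S' Lp y').
    { intros y' Hy'. rewrite (WB_ext S' S Lp (negc x) x), (WB_ext S' S Lp y' (negc y')).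
      - apply Hmin. intros j Hj i. unfold tau, negc. pose proof (Hy' j Hj i). unfold tau in H.
        rewrite opp_IZR in H. lra.
      - intros; unfold S'; auto.
      - intros; unfold S'. f_equal. apply functional_extensionality; intro i; unfold negc; lra. }
    pose proof (core_ineq d S' r p (fun j => - q j)%Z Hloc' Hsub' HB' Hind span Lp HLpN HLp (negc x) Hx' Hmin' B (negc ym) HBN) as H.
    rewrite (WB_ext S' S B (negc x) x), (WB_ext S' S B (conf_add (negc x) (negc ym)) (conf_add x ym)) in H.
    - apply H.
      + intros i Hi. apply Hy. unfold ym, negc in Hi. intros E. rewrite E in Hi. apply Hi. unfold Rmin; destruct Rle_dec; lra.
      + intros i. unfold ym, negc. pose proof (Rmin_r (y i) 0). lra.
    - intros; unfold S'. f_equal. apply functional_extensionality; intro i; unfold negc, conf_add; lra.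
    - intros; unfold S'. f_equal. apply functional_extensionality; intro i; unfold negc; lra. }
  pose proof (WB_submod S B Hsub (conf_add x y) x) as H3.
  replace (cmax (conf_add x y) x) with (conf_add x yp) in H3.
  replace (cmin (conf_add x y) x) with (conf_add x ym) in H3. lra.
  all: apply functional_extensionality; intro i; unfold cmax, cmin, conf_add, yp, ym.
  - unfold Rmin; destruct Rle_dec, Rle_dec; lra.
  - unfold Rmax; destruct Rle_dec, Rle_dec; lra.
Qed.
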